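(* For every natural number $n\ge1$, $bell(n)=bell_+(n)$.
   Context: $\Re_{n+1}$ denotes the real $(n+1)\times(n+1)$ matrices with indices $0\le i,j\le n$. $bell(n)$ is the set of all $(p_{ij})\in\Re_{n+1}$ such that $p_{00}=1$ and there exist a finite-dimensional Hilbert space $H$, projections $E_1,\dots,E_n,F_1,\dots,F_n$ on $H$, and a density operator $W$ on $H\otimes H$ with $p_{i0}=\mathrm{tr}[W(E_i\otimes I)]$, $p_{0j}=\mathrm{tr}[W(I\otimes F_j)]$, $p_{ij}=\mathrm{tr}[W(E_i\otimes F_j)]$ for $i,j=1,\dots,n$. $bell_+(n)$ is the set of all $(q_{ij})\in\Re_{n+1}$ such that there exist a finite-dimensional Hilbert space $H$, positive semidefinite operators $A_0=I,A_1,\dots,A_n$ and $B_0=I,B_1,\dots,B_n$ on $H$ whose spectra are contained in $[0,1]$, and a density operator $W$ on $H\otimes H$ with $q_{ij}=\mathrm{tr}[W(A_i\otimes B_j)]$ for all $i,j=0,1,\dots,n$. *)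

(* Defs.v *)
From mathcomp Require Import all_boot all_algebra reals complex mxtens.
Set Implicit Arguments. Unset Strict Implicit. Unset Printing Implicit Defensive.
Import GRing.Theory Num.Theory.
Local Open Scope ring_scope.
Local Open Scope complex_scope.

Section QDefs.
Variable R : realType.
Local Notation C := (R[i]).

(* A Hilbert space of finite dimension d is modelled as C^d; operators are
   'M[C]_d, and H (x) H is C^(d*d) with the Kronecker product tensmx. *)

Definition adjmx (m n : nat) (A : 'M[C]_(m, n)) : 'M[C]_(n, m) :=
  (map_mx Num.conj A)^T.

Definition selfadj (d : nat) (A : 'M[C]_d) : Prop := adjmx A = A.

Definition psd (d : nat) (A : 'M[C]_d) : Prop :=
  selfadj A /\ forall v : 'cV[C]_d, 0 <= (adjmx v *m A *m v) 0 0.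

Definition projection (d : nat) (P : 'M[C]_d) : Prop :=
  P *m P = P /\ selfadj P.

Definition density (d : nat) (W : 'M[C]_d) : Prop :=
  psd W /\ \tr W = 1.

Definition spectrum_in01 (d : nat) (A : 'M[C]_d) : Prop :=
  forall a : C, eigenvalue A a -> 0 <= a <= 1.

Definition bell (n : nat) : 'M[R]_(n.+1) -> Prop := fun p =>
  p ord0 ord0 = 1 /\
  exists (d : nat) (E F : 'I_n -> 'M[C]_d) (W : 'M[C]_(d * d)),
    (forall k, projection (E k)) /\ (forall k, projection (F k)) /\
    density W /\
    (forall i : 'I_n,
        (p (lift ord0 i) ord0)%:C = \tr (W *m tensmx (E i) (1%:M : 'M[C]_d))) /\
    (forall j : 'I_n,
        (p ord0 (lift ord0 j))%:C = \tr (W *m tensmx (1%:M : 'M[C]_d) (F j))) /\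
    (forall i j : 'I_n,
        (p (lift ord0 i) (lift ord0 j))%:C = \tr (W *m tensmx (E i) (F j))).

Definition bell_plus (n : nat) : 'M[R]_(n.+1) -> Prop := fun q =>
  exists (d : nat) (A B : 'I_n.+1 -> 'M[C]_d) (W : 'M[C]_(d * d)),
    A ord0 = 1%:M /\ B ord0 = 1%:M /\
    (forall i, psd (A i) /\ spectrum_in01 (A i)) /\
    (forall j, psd (B j) /\ spectrum_in01 (B j)) /\
    density W /\
    (forall i j : 'I_n.+1, (q i j)%:C = \tr (W *m tensmx (A i) (B j))).

End QDefs.

(* Main.v *)
Require Import Defs.
From mathcomp Require Import all_boot all_algebra reals complex mxtens spectral sesquilinear.
From mathcomp Require Import order ring.
Import Order.TTheory GRing.Theory Num.Theory.
Local Open Scope ring_scope.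
Set Implicit Arguments. Unset Strict Implicit.

Section Q.
Variable R : realType.
Local Notation C := (R[i]).

Lemma adjmxM m n p (A : 'M[C]_(m, n)) (B : 'M[C]_(n, p)) :
  adjmx (A *m B) = adjmx B *m adjmx A.
Proof. by rewrite /adjmx map_mxM trmx_mul. Qed.

Lemma adjmxK m n (A : 'M[C]_(m, n)) : adjmx (adjmx A) = A.
Proof.
by apply/matrixP => i j; rewrite /adjmx !mxE conjCK.
Qed.

Lemma adjmxD m n (A B : 'M[C]_(m, n)) : adjmx (A + B) = adjmx A + adjmx B.
Proof. by apply/matrixP => i j; rewrite /adjmx !mxE rmorphD. Qed.

Lemma adjmxN m n (A : 'M[C]_(m, n)) : adjmx (- A) = - adjmx A.
Proof. by apply/matrixP => i j; rewrite /adjmx !mxE rmorphN. Qed.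

Lemma adjmx1 n : adjmx (1%:M : 'M[C]_n) = 1%:M.
Proof. by rewrite /adjmx map_mx1 trmx1. Qed.

Lemma adjmx0 m n : adjmx (0 : 'M[C]_(m,n)) = 0.
Proof. by apply/matrixP => i j; rewrite /adjmx !mxE rmorph0. Qed.

Lemma adjmx_block m1 m2 n1 n2 (a : 'M[C]_(m1,n1)) (b : 'M[C]_(m1,n2))
  (c : 'M[C]_(m2,n1)) (d : 'M[C]_(m2,n2)) :
  adjmx (block_mx a b c d) = block_mx (adjmx a) (adjmx c) (adjmx b) (adjmx d).
Proof. by rewrite /adjmx map_block_mx tr_block_mx. Qed.

Lemma adjmx_col m1 m2 n (a : 'M[C]_(m1,n)) (b : 'M[C]_(m2,n)) :
  adjmx (col_mx a b) = row_mx (adjmx a) (adjmx b).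
Proof. by rewrite /adjmx map_col_mx tr_col_mx. Qed.

Lemma adjmx_tens m n p q (A : 'M[C]_(m,n)) (B : 'M[C]_(p,q)) :
  adjmx (tensmx A B) = tensmx (adjmx A) (adjmx B).
Proof. by rewrite /adjmx map_mxT trmx_tens. Qed.

Lemma adjmx_tr n (A : 'M[C]_n) : adjmx A = (A ^t* )%sesqui.
Proof. by rewrite /adjmx map_trmx. Qed.

Lemma tens11 m n : tensmx (1%:M : 'M[C]_m) (1%:M : 'M[C]_n) = 1%:M.
Proof.
apply/matrixP => i j.
case: (mxtens_indexP i) => i1 i2; case: (mxtens_indexP j) => j1 j2.
rewrite tensmxE !mxE (inj_eq (can_inj (@mxtens_indexK m n))).
rewrite xpair_eqE.
by case: (i1 == j1); case: (i2 == j2); rewrite /= ?mulr1n ?mulr0n ?mulr1 ?mulr0 ?mul0r.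
Qed.

Lemma adj_ge0 m (u : 'cV[C]_m) : 0 <= (adjmx u *m u) 0 0.
Proof.
rewrite !mxE; apply: sumr_ge0 => k _.
by rewrite /adjmx !mxE mulrC mul_conjC_ge0.
Qed.

Lemma proj_psd d (P : 'M[C]_d) : projection P -> psd P /\ spectrum_in01 P.
Proof.
move=> [PP sP]; split.
  split => // v.
  have -> : adjmx v *m P *m v = adjmx (P *m v) *m (P *m v).
    by rewrite adjmxM sP -mulmxA -(mulmxA _ P) (mulmxA P) PP mulmxA.
  exact: adj_ge0.
move=> a /eigenvalueP [v hv v0].
have : (a * a - a) *: v = 0.
  by rewrite scalerBl -scalerA -hv scalemxAl -hv -mulmxA PP subrr.
move=> /eqP; rewrite scaler_eq0 (negPf v0) orbF subr_eq0 => /eqP h.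
case: (eqVneq a 0) => [->|anz]; first by rewrite lexx ler01.
have -> : a = 1 by apply: (mulfI anz); rewrite mulr1.
by rewrite ler01 lexx.
Qed.

Lemma proj1 d : projection (1%:M : 'M[C]_d).
Proof. by split; [rewrite mulmx1 | rewrite /selfadj adjmx1]. Qed.


Definition cU d (U X : 'M[C]_d) := adjmx U *m X *m U.
Definition mu d (A : 'M[C]_d) : 'rV[C]_d :=
  \row_k sqrtC (spectral_diag A 0 k * (1 - spectral_diag A 0 k)).
Definition dil d (A : 'M[C]_d) : 'M[C]_(d + d) :=
  block_mx A (cU (spectralmx A) (diag_mx (mu A)))
             (cU (spectralmx A) (diag_mx (mu A))) (1%:M - A).
Definition Jmx d : 'M[C]_(d + d, d) := col_mx 1%:M 0.

Lemma Jcorner d (X : 'M[C]_(d + d)) a b c e :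
  X = block_mx a b c e -> adjmx (Jmx d) *m X *m Jmx d = a.
Proof.
move=> ->; rewrite /Jmx adjmx_col adjmx1 adjmx0 mul_row_block !mul1mx !mul0mx !addr0.
by rewrite mul_row_col mulmx1 mulmx0 addr0.
Qed.

Lemma JJ d : adjmx (Jmx d) *m Jmx d = 1%:M.
Proof.
by rewrite /Jmx adjmx_col adjmx1 adjmx0 mul_row_col mulmx1 mul0mx addr0.
Qed.

Lemma adj_diag d (v : 'rV[C]_d) : (forall k, 0 <= v 0 k) ->
  adjmx (diag_mx v) = diag_mx v.
Proof.
move=> hv; apply/matrixP => i j; rewrite /adjmx !mxE.
case: (eqVneq i j) => [->|ne]; first by rewrite !mulr1n geC0_conj.
by rewrite ?mulr0n ?rmorph0.
Qed.

Lemma dil_ok d (A : 'M[C]_d) : psd A -> spectrum_in01 A ->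
  projection (dil A) /\ adjmx (Jmx d) *m dil A *m Jmx d = A.
Proof.
move=> [sA _] spA; split; last exact: Jcorner.
set U := spectralmx A; set l := spectral_diag A.
have uU : U \is unitarymx := spectral_unitarymx A.
have UU' : U *m adjmx U = 1%:M by rewrite adjmx_tr; apply/unitarymxP.
have U'U : adjmx U *m U = 1%:M.
  by rewrite adjmx_tr -(mul1mx (_ *m U)) mulmxA mulmxKtV.
have nA : A \is normalmx by apply/normalmxP; rewrite -adjmx_tr sA.
have eA : A = adjmx U *m diag_mx l *m U.
  by rewrite adjmx_tr -invmx_unitary //; exact/orthomx_spectralP.
have hl : forall k, 0 <= l 0 k <= 1.
  move=> k; apply: spA; apply/eigenvalueP; exists (delta_mx 0 k *m U).
    rewrite eA !mulmxA -(mulmxA _ U) UU' mulmx1 scalemxAl; congr (_ *m _).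
    rewrite mul_mx_diag; apply/rowP => j; rewrite !mxE.
    case: (eqVneq k j) => [->|ne]; first by rewrite !mulr1n mulrC.
    by rewrite !mulr0n mulr0 mul0r.
  apply/eqP => h; have : (delta_mx 0 k : 'rV[C]_d) *m U *m adjmx U = 0 by rewrite h mul0mx.
  rewrite -mulmxA UU' mulmx1 => /matrixP /(_ 0 k); rewrite !mxE !eqxx /=.
  by move=> /eqP; rewrite oner_eq0.
have cUM : forall X Y, cU U X *m cU U Y = cU U (X *m Y).
  move=> X Y; rewrite /cU !mulmxA -[_ *m U *m adjmx U]mulmxA UU' mulmx1 //.
have cUD : forall X Y, cU U X + cU U Y = cU U (X + Y).
  by move=> X Y; rewrite /cU mulmxDr mulmxDl.
have cUadj : forall X, adjmx (cU U X) = cU U (adjmx X).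
  by move=> X; rewrite /cU !adjmxM adjmxK mulmxA.
set D := diag_mx l; set M := diag_mx (mu A); set Dc := diag_mx (\row_k (1 - l 0 k)).
have eAc : 1%:M - A = cU U Dc.
  have -> : Dc = 1%:M - D.
    apply/matrixP => i j; rewrite !mxE; case: (i == j); rewrite ?mulr1n ?mulr0n //.
    by rewrite subr0.
  by rewrite eA /cU mulmxBr mulmxBl mulmx1 U'U.
have hP : dil A = block_mx (cU U D) (cU U M) (cU U M) (cU U Dc).
  by rewrite /dil -eAc; congr block_mx; exact: eA.
have hmu : forall k, mu A 0 k * mu A 0 k = l 0 k * (1 - l 0 k).
  move=> k; rewrite mxE -expr2 sqrtCK //.
have Dd : forall (v w : 'rV[C]_d), diag_mx v + diag_mx w = diag_mx (v + w).
  move=> v w; apply/matrixP => i j; rewrite !mxE.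
  by case: (i == j); rewrite ?mulr1n ?mulr0n ?addr0.
have i1 : D *m D + M *m M = D.
  rewrite !mulmx_diag Dd; congr diag_mx; apply/rowP => k; rewrite !mxE.
  have := hmu k; rewrite mxE => ->; ring.
have i2 : D *m M + M *m Dc = M.
  rewrite !mulmx_diag Dd; congr diag_mx; apply/rowP => k; rewrite !mxE; ring.
have i3 : M *m D + Dc *m M = M.
  rewrite !mulmx_diag Dd; congr diag_mx; apply/rowP => k; rewrite !mxE; ring.
have i4 : M *m M + Dc *m Dc = Dc.
  rewrite !mulmx_diag Dd; congr diag_mx; apply/rowP => k; rewrite !mxE.
  have := hmu k; rewrite mxE => ->; ring.
split.
  by rewrite hP mulmx_block !cUM !cUD i1 i2 i3 i4.
have l0 : forall k, 0 <= l 0 k by move=> k; case/andP: (hl k).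
rewrite /selfadj hP adjmx_block !cUadj !adj_diag //.
- by move=> k; rewrite mxE subr_ge0; case/andP: (hl k).
- by move=> k; rewrite mxE sqrtC_ge0 mulr_ge0 // subr_ge0; case/andP: (hl k).
Qed.


Lemma Ktens d (X Y : 'M[C]_(d + d)) :
  adjmx (tensmx (Jmx d) (Jmx d)) *m tensmx X Y *m tensmx (Jmx d) (Jmx d) =
  tensmx (adjmx (Jmx d) *m X *m Jmx d) (adjmx (Jmx d) *m Y *m Jmx d).
Proof. by rewrite adjmx_tens !tensmx_mul. Qed.

Lemma trK d (W : 'M[C]_(d * d)) (T : 'M[C]_((d + d) * (d + d))) :
  \tr (tensmx (Jmx d) (Jmx d) *m W *m adjmx (tensmx (Jmx d) (Jmx d)) *m T) =
  \tr (W *m (adjmx (tensmx (Jmx d) (Jmx d)) *m T *m tensmx (Jmx d) (Jmx d))).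
Proof. by rewrite -!mulmxA mxtrace_mulC !mulmxA. Qed.

End Q.

Theorem theorem2 (R : realType) (n : nat) : (1 <= n)%N ->
  forall p : 'M[R]_(n.+1), bell p <-> bell_plus p.
Proof.
move=> _ p; split.
  move=> [p00 [d [E [F [W [hE [hF [hW [h1 [h2 h3]]]]]]]]]].
  pose A k := if unlift ord0 k is Some i then E i else 1%:M.
  pose B k := if unlift ord0 k is Some i then F i else 1%:M.
  exists d, A, B, W; split; first by rewrite /A unlift_none.
  split; first by rewrite /B unlift_none.
  split.
    move=> k; apply: proj_psd; rewrite /A.
    by case: (unlift _ _) => [i|]; [exact: hE | exact: proj1].
  split.
    move=> k; apply: proj_psd; rewrite /B.
    by case: (unlift _ _) => [i|]; [exact: hF | exact: proj1].
  split => // i j.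
  case: (unliftP ord0 i) => [i'|] ->; case: (unliftP ord0 j) => [j'|] ->;
    rewrite /A /B ?liftK ?unlift_none //.
  by rewrite p00 tens11 mulmx1 hW.2.
move=> [d [A [B [W [hA0 [hB0 [hA [hB [hW hq]]]]]]]]].
split.
  have := hq ord0 ord0; rewrite hA0 hB0 tens11 mulmx1 hW.2.
  by case.
pose K := tensmx (Jmx R d) (Jmx R d).
have cA := fun i => dil_ok (hA i).1 (hA i).2.
have cB := fun i => dil_ok (hB i).1 (hB i).2.
exists (d + d), (fun i => dil (A (lift ord0 i))), (fun j => dil (B (lift ord0 j))),
  (K *m W *m adjmx K).
split; first by move=> k; case: (cA (lift ord0 k)).
split; first by move=> k; case: (cB (lift ord0 k)).
split.
  split.
    split.
      by rewrite /selfadj !adjmxM adjmxK hW.1.1 mulmxA.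
    move=> v.
    have -> : adjmx v *m (K *m W *m adjmx K) *m v =
              adjmx (adjmx K *m v) *m W *m (adjmx K *m v).
      by rewrite !adjmxM adjmxK !mulmxA.
    exact: hW.1.2.
  rewrite mxtrace_mulC mulmxA /K adjmx_tens tensmx_mul JJ tens11 mul1mx.
  exact: hW.2.
split.
  move=> i; rewrite trK Ktens (cA _).2 mulmx1 JJ hq hB0 //.
split.
  move=> j; rewrite trK Ktens (cB _).2 mulmx1 JJ hq hA0 //.
move=> i j; rewrite trK Ktens (cA _).2 (cB _).2 hq //.
Qed.
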